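(* For every infinite binary sequence $b\in\{0,1\}^{\mathbb N}$, the set $F_b=\{v\in\mathscr C : \rho(v)=b\}$ satisfies $$F_b=\{\langle a\rangle \sigma(b) : a\in\mathbb N^{\mathbb N}\}.$$ Consequently $F_b$ is uncountable, $\sigma(b)$ is the unique element of $F_b$ containing no two consecutive $0$'s, and $\sigma(b)$ is the maximum of $F_b$ with respect to the lexicographic order.
   Context: Binary words are finite or infinite sequences over $\{0,1\}$. Define $\rho$ on binary words: for $b=b_1b_2\dots$, $\rho(b)$ is obtained by deleting every digit $b_n=0$ and replacing every $b_n=1$ by $0$ if $n$ is odd and by $1$ if $n$ is even. Let $\mathscr C$ be the set of infinite binary sequences containing infinitely many $1$'s. Define $\sigma$ on a binary sequence $b=b_1b_2\dots$ as the concatenation $\sigma(b)=s_1s_2\dots$ where $s_1=1$ if $b_1=0$ and $s_1=01$ if $b_1=1$, and for $n\ge2$, $s_n=1$ if $b_n\ne b_{n-1}$ and $s_n=01$ if $b_n=b_{n-1}$. For $a=(a_1,a_2,\dots)\in\mathbb N^{\mathbb N}$ (with $\mathbb N$ including $0$) and $c\in\mathscr C$, $\langle a\rangle c$ denotes the sequence obtained from $c$ by inserting the block $0^{2a_k}$ immediately before the $k$-th occurrence of $1$ in $c$, for every $k\ge1$. *)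

(* Defs.v *)
From mathcomp Require Import all_boot.
Set Implicit Arguments. Unset Strict Implicit. Unset Printing Implicit Defensive.

(* Infinite binary sequences b = b_1 b_2 ... are functions nat -> bool,
   0-indexed: (b i) is the digit b_{i+1}; true = 1, false = 0. *)

Definition pref (v : nat -> bool) (n : nat) : seq bool := mkseq v n.

Definition inC (v : nat -> bool) : Prop := forall n, exists m, n <= m /\ v m = true.

(* rho(v) = b, for v with infinitely many 1's: the (k+1)-th digit of rho(v)
   comes from the (k+1)-th 1 of v, located at 0-indexed position p
   (1-indexed position p+1); it is 0 if p+1 is odd and 1 if p+1 is even,
   i.e. it equals (odd p). *)
Definition rho_is (v b : nat -> bool) : Prop :=
  forall k p, v p = true -> count id (pref v p) = k -> b k = odd p.

Definition inF (b v : nat -> bool) : Prop := inC v /\ rho_is v b.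

Definition sigma_block (b : nat -> bool) (n : nat) : seq bool :=
  match n with
  | 0 => if b 0 then [:: false; true] else [:: true]
  | n'.+1 => if b n == b n' then [:: false; true] else [:: true]
  end.

(* sigma(b) = s_1 s_2 ...; each block is nonempty, so the first i+1 blocks
   already determine the digit at (0-indexed) position i. *)
Definition sigma (b : nat -> bool) : nat -> bool :=
  fun i => nth false (flatten (mkseq (sigma_block b) i.+1)) i.

(* finite insertion: k = number of 1's already read *)
Fixpoint ins (a : nat -> nat) (l : seq bool) (k : nat) : seq bool :=
  match l with
  | [::] => [::]
  | true :: l' => nseq (2 * a k) false ++ true :: ins a l' k.+1
  | false :: l' => false :: ins a l' k
  end.

(* <a>c : insert 0^{2 a_k} before the k-th 1 of c (a_k is (a (k-1)) here).
   The image of a prefix of length i+1 has length >= i+1 and is a prefix of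
   the result, so it determines the digit at position i. *)
Definition insert (a : nat -> nat) (c : nat -> bool) : nat -> bool :=
  fun i => nth false (ins a (pref c i.+1) 0) i.

Definition no00 (v : nat -> bool) : Prop := forall i, v i || v i.+1.

Definition lex_le (u w : nat -> bool) : Prop :=
  u =1 w \/ exists n, (forall i, i < n -> u i = w i) /\ u n = false /\ w n = true.

Definition countable_set (S : (nat -> bool) -> Prop) : Prop :=
  exists f : nat -> nat -> bool, forall v, S v -> exists n, f n =1 v.

(* Main.v *)
Require Import Defs.
From mathcomp Require Import all_boot zify.
Set Implicit Arguments. Unset Strict Implicit. Unset Printing Implicit Defensive.

Definition cnt (v : nat -> bool) n := count id (pref v n).

Lemma cnt0 v : cnt v 0 = 0. Proof. by []. Qed.
Lemma cntS v n : cnt v n.+1 = cnt v n + v n.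
Proof. by rewrite /cnt /pref mkseqS -cats1 count_cat /=; case: (v n); rewrite ?addn0. Qed.

Lemma cnt_mono v m n : m <= n -> cnt v m <= cnt v n.
Proof.
move=> /subnK <-; elim: (n - m) => [|d IH]; first by rewrite add0n.
by rewrite addSn cntS; apply: leq_trans IH _; apply: leq_addr.
Qed.

Definition enum_ones (v : nat -> bool) (P : nat -> nat) :=
  (forall k, P k < P k.+1) /\ (forall i, v i = true <-> exists k, P k = i).

Lemma inc_lt P : (forall k, P k < P k.+1) -> forall j k, j < k -> P j < P k.
Proof.
move=> H j k; elim: k => [//|k IH]; rewrite ltnS leq_eqVlt => /orP [/eqP ->//|/IH h].
exact: ltn_trans h (H k).
Qed.

Lemma inc_le P : (forall k, P k < P k.+1) -> forall j k, j <= k -> P j <= P k.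
Proof.
move=> H j k; rewrite leq_eqVlt => /orP [/eqP ->//|/(inc_lt H) h]; exact: ltnW.
Qed.

Lemma inc_ge P : (forall k, P k < P k.+1) -> forall k, k <= P k.
Proof. move=> H; elim=> [//|k IH]; exact: leq_ltn_trans IH (H k). Qed.

Lemma enum_cnt v P : enum_ones v P -> forall k, cnt v (P k) = k.
Proof.
move=> [Hinc Hv].
have Hlt := inc_lt Hinc.
have nv : forall i, (forall k, P k != i) -> v i = false.
  move=> i Hi; apply/negbTE/negP => /Hv [k Hk]; by move: (Hi k); rewrite Hk eqxx.
have H0 : forall n, n <= P 0 -> cnt v n = 0.
  elim=> [//|n IH] Hn; rewrite cntS IH ?(ltnW Hn) // nv // => k.
  apply/eqP => Hk; have : P 0 <= P k by apply: (inc_le Hinc).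
  by rewrite Hk leqNgt Hn.
elim=> [|k IH]; first exact: H0.
have Hd : forall d, P k + d < P k.+1 -> cnt v (P k + d).+1 = k.+1.
  elim=> [|d IHd] Hd; first by rewrite addn0 cntS IH (proj2 (Hv _)); [rewrite addn1| exists k].
  rewrite cntS addnS IHd; last by apply: ltn_trans Hd; rewrite addnS.
  rewrite nv ?addn0 // => j; apply/eqP => Hj.
  case: (ltngtP j k.+1) => hj.
  - have : P j <= P k by exact: inc_le.
    rewrite Hj; lia.
  - have : P k.+1 <= P j by apply: (inc_le Hinc); lia.
    rewrite Hj; lia.
  - move: Hd; rewrite -hj Hj; lia.
have e : P k.+1 = (P k + (P k.+1 - P k).-1).+1 by have := Hinc k; lia.
rewrite e Hd //; have := Hinc k; lia.
Qed.

Lemma enum_rho v P b : enum_ones v P -> (rho_is v b <-> forall k, b k = odd (P k)).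
Proof.
move=> H; have Hc := enum_cnt H; case: H => Hinc Hv; split.
- move=> Hr k; apply: Hr; [by apply/Hv; exists k | exact: Hc].
- move=> Hb k p /Hv [j <-] e; have := Hc j; rewrite /cnt e => ->; exact: Hb.
Qed.

Lemma enum_inC v P : enum_ones v P -> inC v.
Proof.
move=> [Hinc Hv] n; exists (P n); split; first exact: inc_ge.
by apply/Hv; exists n.
Qed.

Lemma enum_ext v w P : enum_ones v P -> enum_ones w P -> v =1 w.
Proof.
move=> [_ Hv] [_ Hw] i; apply/idP/idP => [/Hv h|/Hw h]; [exact/Hw|exact/Hv].
Qed.

Lemma enum_eq v P P' : P =1 P' -> enum_ones v P -> enum_ones v P'.
Proof.
move=> e [Hi Hv]; split => [k|i]; first by rewrite -!e.
rewrite Hv; split=> [[k <-]|[k <-]]; exists k; by rewrite e.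
Qed.

Lemma cnt_unbounded v : inC v -> forall k, exists n, k <= cnt v n.
Proof.
move=> Hc; elim=> [|k [n Hn]]; first by exists 0.
have [m [Hm Hvm]] := Hc n; exists m.+1.
by rewrite cntS Hvm addn1 ltnS (leq_trans Hn) // cnt_mono.
Qed.

Lemma inC_enum v : inC v -> exists P, enum_ones v P.
Proof.
move=> Hc.
have exP : forall k, exists m, v m && (cnt v m == k).
  move=> k; have [n Hn] := cnt_unbounded Hc k.+1.
  have ex : exists n, k < cnt v n by exists n.
  case: (ex_minnP ex) => n0 h0 hmin.
  case: n0 h0 hmin => [//|m] h0 hmin.
  have hm : cnt v m <= k by rewrite leqNgt; apply/negP => /hmin; rewrite ltnn.
  exists m; move: h0; rewrite cntS; case: (v m) => /=; lia.
pose P k := ex_minn (exP k).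
have HP : forall k, v (P k) /\ cnt v (P k) = k.
  move=> k; rewrite /P; case: (ex_minnP (exP k)) => m /andP [h1 /eqP h2] _; by [].
have uniq : forall m m', v m -> cnt v m' = cnt v m -> m' <= m.
  move=> m m' hm e; rewrite leqNgt; apply/negP => lt.
  have := cnt_mono v lt; rewrite cntS hm e; lia.
exists P; split.
- move=> k; rewrite ltnNge; apply/negP => le.
  have := cnt_mono v le; rewrite (proj2 (HP k)) (proj2 (HP k.+1)); lia.
- move=> i; split => [hi|[k <-]]; last exact: (proj1 (HP k)).
  exists (cnt v i); apply/eqP; rewrite eqn_leq; apply/andP; split.
  + apply: uniq hi _; by rewrite (proj2 (HP _)).
  + apply: uniq (proj1 (HP _)) _; by rewrite (proj2 (HP _)).
Qed.

Section Sig.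
Variable b : nat -> bool.
Definition L n := flatten (mkseq (sigma_block b) n).
Definition Q k := (size (L k.+1)).-1.

Lemma LS n : L n.+1 = L n ++ sigma_block b n.
Proof. by rewrite /L mkseqS flatten_rcons. Qed.

Lemma size_block n : size (sigma_block b n) = if n is n'.+1 then (if b n == b n' then 2 else 1) else (if b 0 then 2 else 1).
Proof. by case: n => [|n] /=; [case: (b 0)|case: (_ == _)]. Qed.

Lemma nth_block n j : j < size (sigma_block b n) -> nth false (sigma_block b n) j = (j == (size (sigma_block b n)).-1).
Proof. case: n => [|n] /=; [case: (b 0)|case: (_ == _)]; case: j => [|[|j]] //. Qed.

Lemma block_pos n : 0 < size (sigma_block b n).
Proof. by case: n => [|n] /=; [case: (b 0)|case: (_ == _)]. Qed.

Lemma size_L n : n <= size (L n).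
Proof.
elim: n => [//|n IH]; rewrite LS size_cat; have := block_pos n; lia.
Qed.

Lemma QS k : Q k.+1 = Q k + (if b k.+1 == b k then 2 else 1).
Proof.
rewrite /Q LS size_cat size_block.
have := size_L k.+1; case: (size (L k.+1)) => [//|s] _ /=.
by case: (_ == _).
Qed.

Lemma Q0 : Q 0 = b 0.
Proof. by rewrite /Q /L /=; case: (b 0). Qed.

Lemma Q_inc k : Q k < Q k.+1.
Proof. rewrite QS; case: (_ == _); lia. Qed.

Lemma Q_odd k : odd (Q k) = b k.
Proof.
elim: k => [|k IH]; first by rewrite Q0; case: (b 0).
rewrite QS oddD IH; by case: (b k.+1); case: (b k).
Qed.

Lemma size_LQ k : size (L k.+1) = (Q k).+1.
Proof. by rewrite /Q; have := size_L k.+1; case: (size _). Qed.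

Lemma size_L_mono m n : m <= n -> size (L m) <= size (L n).
Proof.
move=> /subnK <-; elim: (n - m) => [|d IH]; first by rewrite add0n.
by rewrite addSn LS size_cat; apply: leq_trans IH _; apply: leq_addr.
Qed.

Lemma Q_lt_size k n : k < n -> Q k < size (L n).
Proof. move=> h; have := size_L_mono h; rewrite size_LQ; lia. Qed.

Lemma nth_L n i : i < size (L n) -> (nth false (L n) i = true <-> exists2 k, k < n & Q k = i).
Proof.
elim: n i => [//|n IH] i; rewrite LS nth_cat size_cat.
have sz : size (L n.+1) = size (L n) + size (sigma_block b n) by rewrite LS size_cat.
have hq : Q n = (size (L n) + size (sigma_block b n)).-1 by rewrite /Q sz.
have bpos := block_pos n.
case: ifP => hi hs.
- rewrite IH //; split => [[k hk e]|[k hk e]]; exists k => //; first exact: ltnW.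
  move: hk; rewrite ltnS leq_eqVlt => /orP [/eqP ek|//].
  move: hi; rewrite -e ek hq; lia.
- rewrite nth_block; last by lia.
  split => [/eqP e|[k hk e]].
  + exists n => //; rewrite hq; move: e hs hi; lia.
  + move: hk; rewrite ltnS leq_eqVlt => /orP [/eqP ek|hk].
    * apply/eqP; move: e; rewrite ek hq; move: hs hi; lia.
    * have := Q_lt_size hk; rewrite e hi //.
Qed.

Lemma L_pref n m i : n <= m -> i < size (L n) -> nth false (L m) i = nth false (L n) i.
Proof.
move=> /subnK <-; elim: (m - n) => [|d IH] hi; first by rewrite add0n.
by rewrite addSn LS nth_cat (leq_trans hi) ?size_L_mono ?leq_addl // IH.
Qed.

Lemma sigma_enum : enum_ones (sigma b) Q.
Proof.
split; first exact: Q_inc.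
move=> i; rewrite /sigma -/(L i.+1) nth_L ?(size_L i.+1) //.
split => [[k _ e]|[k e]]; first by exists k.
exists k => //; rewrite ltnS -e; apply: (inc_ge Q_inc).
Qed.
End Sig.

Fixpoint sumfrom (a : nat -> nat) k n :=
  if n is n'.+1 then a k + sumfrom a k.+1 n' else 0.

Lemma sumfromS a k n : sumfrom a k n.+1 = sumfrom a k n + a (k + n).
Proof.
elim: n k => [|n IH] k; first by rewrite /= !addn0.
change (a k + sumfrom a k.+1 n.+1 = a k + sumfrom a k.+1 n + a (k + n.+1)).
by rewrite IH addnA addSnnS.
Qed.

Lemma nth_ins a l k i : nth false (ins a l k) i = true <->
  exists2 j, j < size l & (nth false l j = true /\ i = j + 2 * sumfrom a k (count id (take j.+1 l))).
Proof.
elim: l k i => [|[] l IH] k i /=.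
- rewrite nth_nil; split; first by move=> h; discriminate h. by case.
- rewrite nth_cat size_nseq nth_nseq if_same; case: ifP => hi.
  + split; first by move=> h; discriminate h. case => [[|j] hj [hl e]]; move: e hi => /=; rewrite ?addn0 ?take0 /=; lia.
  + case e: (i - 2 * a k) => [|m] /=.
    * split => // _; exists 0 => //=; split => //; rewrite take0 /=; lia.
    * rewrite IH; split => [[j hj [hl em]]|[[|j] hj [hl em]]].
      -- exists j.+1 => //; split => //=; rewrite ?add0n; lia.
      -- move: em => /=; rewrite take0 /=; rewrite ?add0n; lia.
      -- exists j => //; split => //; move: em => /=; rewrite ?add0n; lia.
- case: i => [|m] /=.
  + split; first by move=> h; discriminate h. case => [[|j] hj [hl e]] //; rewrite ?add0n; lia.
  + rewrite IH; split => [[j hj [hl em]]|[[|j] hj [hl em]]].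
    * exists j.+1 => //; split => //=; rewrite ?add0n; lia.
    * by [].
    * exists j => //; split => //; move: em => /=; rewrite ?add0n; lia.
Qed.

Lemma take_pref c j n : j <= n -> take j (pref c n) = pref c j.
Proof. by move=> h; rewrite /pref /mkseq -map_take take_iota (minn_idPl h). Qed.

Lemma insert_enum a c Pc : enum_ones c Pc ->
  enum_ones (insert a c) (fun k => Pc k + 2 * sumfrom a 0 k.+1).
Proof.
move=> H; have Hc := enum_cnt H; case: H => Hinc Hv; split.
- move=> k; rewrite (sumfromS a 0 k.+1); have := Hinc k; lia.
- move=> i; rewrite /insert nth_ins size_mkseq; split.
  + case=> j hj [hl e]; move: hl; rewrite nth_mkseq // => /[dup] cj /Hv [k ek].
    exists k; rewrite e take_pref //; rewrite -/(cnt c j.+1) cntS cj -ek Hc addn1 //.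
  + case=> k e; exists (Pc k); first lia.
    rewrite nth_mkseq; last lia.
    have cj : c (Pc k) = true by apply/Hv; exists k.
    split => //; rewrite take_pref; last lia.
    by rewrite -/(cnt c (Pc k).+1) cntS cj Hc addn1 e.
Qed.

Lemma inF_ext b v w : v =1 w -> inF b w -> inF b v.
Proof.
move=> e [Hc Hr]; have ep : forall n, pref v n = pref w n by move=> n; apply: eq_mkseq.
split.
- move=> n; have [m [h1 h2]] := Hc n; exists m; by rewrite e.
- move=> k p; rewrite e ep; exact: Hr.
Qed.

Lemma inF_enum b v : inF b v -> exists P, enum_ones v P /\ forall k, b k = odd (P k).
Proof.
move=> [Hc Hr]; have [P HP] := inC_enum Hc; exists P; split => //.
exact/(enum_rho b HP).
Qed.

Lemma odd_mod x : x %% 2 = odd x. Proof. exact: modn2. Qed.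

Lemma gaps b P : (forall k, P k < P k.+1) -> (forall k, b k = odd (P k)) ->
  forall k, [/\ Q b k <= P k, (P k - Q b k) %% 2 = 0 & P k - Q b k <= P k.+1 - Q b k.+1].
Proof.
move=> Hinc Hb.
have par : forall k, P k %% 2 = b k /\ Q b k %% 2 = b k.
  by move=> k; rewrite !odd_mod Q_odd Hb.
have step' : forall k, Q b k <= P k -> Q b k.+1 + (P k - Q b k) <= P k.+1.
  move=> k h; rewrite QS; have := Hinc k; have [p1 q1] := par k; have [p2 q2] := par k.+1.
  move: p1 q1 p2 q2; case: (b k); case: (b k.+1) => /=; lia.
have step : forall k, Q b k <= P k -> P k - Q b k <= P k.+1 - Q b k.+1.
  move=> k h; have := step' k h; lia.
have le : forall k, Q b k <= P k.
  elim=> [|k IH]; first by rewrite Q0; have [p _] := par 0; move: p; case: (b 0) => /=; lia.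
  have := step' k IH; lia.
move=> k; split; [exact: le| |exact: step].
have := le k; have [p q] := par k; move: p q; case: (b k) => /=; lia.
Qed.

Lemma not_one v P j : enum_ones v P -> (forall m, P m <> j) -> v j = false.
Proof. move=> [_ Hv] H; apply/negbTE/negP => /Hv [m /H //]. Qed.

Lemma bracket P : (forall k, P k < P k.+1) -> forall i, i < P 0 \/ exists k, P k <= i < P k.+1.
Proof.
move=> Hinc; elim=> [|i [h|[k /andP [h1 h2]]]].
- case e: (P 0) => [|p]; [right; exists 0; rewrite e /=; have := Hinc 0; lia | by left].
- case: (ltngtP i.+1 (P 0)) => h'; [by left| lia |].
  right; exists 0; rewrite h' leqnn /=; exact: Hinc.
- case: (ltngtP i.+1 (P k.+1)) => h'; [right; exists k; apply/andP; split => //; lia| lia |].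
  right; exists k.+1; rewrite h' leqnn /=; exact: Hinc.
Qed.

Lemma insert_inF b a : inF b (insert a (sigma b)).
Proof.
have H := insert_enum a (sigma_enum b); split; first exact: enum_inC H.
apply/(enum_rho b H) => k; by rewrite oddD oddM /= addbF Q_odd.
Qed.

Lemma part1 b v : inF b v <-> exists a : nat -> nat, v =1 insert a (sigma b).
Proof.
split; last by move=> [a e]; apply: inF_ext e (insert_inF b a).
move=> /inF_enum [P [HP Hb]].
have G := gaps (proj1 HP) Hb.
pose D k := (P k - Q b k) %/ 2.
pose a k := if k is k'.+1 then D k - D k' else D 0.
have Dmono : forall k, D k <= D k.+1 by move=> k; apply: leq_div2r; case: (G k).
have sD : forall k, sumfrom a 0 k.+1 = D k.
  elim=> [|k IH]; first by rewrite /= addn0.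
  rewrite sumfromS IH add0n /a; have := Dmono k; lia.
have eP : forall k, Q b k + 2 * sumfrom a 0 k.+1 = P k.
  move=> k; rewrite sD /D; case: (G k) => h1 h2 _; lia.
exists a; apply: enum_ext HP _; apply: enum_eq (insert_enum a (sigma_enum b)).
exact: eP.
Qed.

Lemma part2 b : ~ countable_set (inF b).
Proof.
move=> [f Hf].
pose fix T n := if n is n'.+1 then T n' + f n' (Q b n' + 2 * T n') else 0.
pose a n : nat := f n (Q b n + 2 * T n).
have sT : forall n, sumfrom a 0 n = T n.
  elim=> [//|n IH]; by rewrite sumfromS IH add0n.
have Tmono : forall j k, j <= k -> T j <= T k.
  move=> j k /subnK <-; elim: (k - j) => [|d IH]; first by rewrite add0n.
  rewrite addSn /=; exact: leq_trans IH (leq_addr _ _).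
have [n Hn] := Hf _ (insert_inF b a).
have HE := insert_enum a (sigma_enum b).
set P := fun k => _ in HE.
have PT : forall k, P k = Q b k + 2 * T k.+1 by move=> k; rewrite /P sT.
have QL := inc_lt (@Q_inc b).
have PL := inc_lt (proj1 HE).
pose X := Q b n + 2 * T n.
have HX := Hn X.
case hf: (f n X) HX => HX.
- have [k ek] := (proj2 HE X).1 (esym HX).
  case: (ltngtP k n) => hk.
  + have := QL _ _ hk; have := Tmono _ _ hk; move: ek; rewrite PT /X; lia.
  + have := PL _ _ hk; move: ek; rewrite !PT /X /= /a -/X hf; lia.
  + move: ek; rewrite PT hk /X /= /a -/X hf; lia.
- have : insert a (sigma b) X = true.
    apply/(proj2 HE); exists n; rewrite PT /= /a -/X hf /X; lia.
  by rewrite -HX.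
Qed.

Lemma sigma_inF b : inF b (sigma b).
Proof.
have H := sigma_enum b; split; first exact: enum_inC H.
apply/(enum_rho b H) => k; by rewrite Q_odd.
Qed.

Lemma sigma_no00 b : no00 (sigma b).
Proof.
have [_ Hv] := sigma_enum b.
move=> i; case: (bracket (@Q_inc b) i) => [h|[k /andP [h1 h2]]].
- have q0 : Q b 0 = 1 by move: h; rewrite Q0; case: (b 0).
  have -> : i = 0 by move: h; rewrite q0; lia.
  apply/orP; right; apply/Hv; by exists 0.
- move: h2; rewrite QS => h2; apply/orP.
  case: (ltngtP (Q b k) i) => h3; last by left; apply/Hv; exists k.
  + right; apply/Hv; exists k.+1; rewrite QS; move: h2 h3; case: (_ == _); lia.
  + lia.
Qed.

Lemma between P i : (forall k, P k < P k.+1) -> (i < P 0 \/ exists k, P k < i < P k.+1) ->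
  forall m, P m <> i.
Proof.
move=> Hinc H m e; have L := inc_le Hinc; have Lt := inc_lt Hinc.
case: H => [h|[k /andP [h1 h2]]].
- have := L 0 m isT; lia.
- case: (ltngtP m k) => hm.
  + have := L m k (ltnW hm); lia.
  + have := L k.+1 m hm; lia.
  + subst; lia.
Qed.

Lemma unique_no00 b v : inF b v -> no00 v -> v =1 sigma b.
Proof.
move=> /inF_enum [P [HP Hb]] Hn.
have Hinc := proj1 HP.
have p0 : P 0 <= 1.
  rewrite leqNgt; apply/negP => h; have := Hn 0.
  rewrite !(not_one HP (between Hinc _)) //; left; lia.
have pS : forall k, P k.+1 <= (P k).+2.
  move=> k; rewrite leqNgt; apply/negP => h; have := Hn (P k).+1.
  rewrite !(not_one HP (between Hinc _)) //; right; exists k; apply/andP; split; lia.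
have par : forall k, P k %% 2 = b k /\ Q b k %% 2 = b k.
  by move=> k; rewrite !odd_mod Q_odd Hb.
have eq : forall k, P k = Q b k.
  elim=> [|k IH].
  - rewrite Q0; have [p _] := par 0; move: p p0; case: (b 0) => /=; lia.
  - rewrite QS; have := Hinc k; have := pS k; have [p1 q1] := par k; have [p2 q2] := par k.+1.
    move: p1 q1 p2 q2 IH; case: (b k); case: (b k.+1) => /=; lia.
apply: enum_ext HP _; apply: enum_eq (sigma_enum b) => k; by rewrite eq.
Qed.

From Stdlib Require Classical_Prop.

Lemma lex_max b v : inF b v -> lex_le v (sigma b).
Proof.
move=> /inF_enum [P [HP Hb]].
have Hinc := proj1 HP; have G := gaps Hinc Hb.
have [Hs Hsv] := sigma_enum b.
case: (Classical_Prop.classic (exists n, P n != Q b n)) => [ex|nex].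
- right; case: (ex_minnP ex) => n hn hmin.
  have hlt : Q b n < P n by case: (G n) => h _ _; move: hn h; lia.
  have low : forall k, k < n -> P k = Q b k.
    move=> k hk; apply/eqP; rewrite -(negbK (_ == _)); apply/negP => /hmin; lia.
  have PL := inc_le Hinc; have QL := inc_lt (@Q_inc b).
  exists (Q b n); split; [|split].
  + move=> i hi; apply/idP/idP.
    * move=> /(proj2 HP) [k ek]; apply/Hsv; exists k.
      case: (ltnP k n) => hk; first by rewrite -low.
      have := PL _ _ hk; lia.
    * move=> /Hsv [k ek]; apply/(proj2 HP); exists k.
      case: (ltnP k n) => hk; first by rewrite low.
      have := inc_le (@Q_inc b) hk; lia.
  + apply/negbTE/negP => /(proj2 HP) [k ek].
    case: (ltngtP k n) => hk.
    * have := QL _ _ hk; rewrite -low //; lia.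
    * have := PL _ _ (ltnW hk); lia.
    * subst; lia.
  + by apply/Hsv; exists n.
- left; apply: enum_ext HP _; apply: enum_eq (sigma_enum b) => k.
  case: (eqVneq (P k) (Q b k)) => [e|h]; first by rewrite e. exfalso; apply: nex; by exists k.
Qed.

Theorem proposition2p2 (b : nat -> bool) :
  (forall v : nat -> bool,
      inF b v <-> exists a : nat -> nat, v =1 insert a (sigma b)) /\
  ~ countable_set (inF b) /\
  (inF b (sigma b) /\ no00 (sigma b) /\
     forall v, inF b v -> no00 v -> v =1 sigma b) /\
  (inF b (sigma b) /\ forall v, inF b v -> lex_le v (sigma b)).
Proof.
split; first exact: part1.
split; first exact: part2.
split; first by split; [exact: sigma_inF | split; [exact: sigma_no00 | exact: unique_no00]].
split; [exact: sigma_inF | exact: lex_max].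
Qed.
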